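(* Let $G$ be a connected graph of order $n$ and size $m$, with vertex degrees $d_1, \ldots, d_n$ and normalized Laplacian matrix $\mathcal{L}$. Then $G$ has $k$ distinct $\mathcal{L}$-eigenvalues, where $2 \le k \le n$, if and only if there are $k-1$ distinct non-zero real numbers $\mu_1, \ldots, \mu_{k-1}$ such that (i) $\mathcal{L} - \mu_i I$ is a singular matrix for every $1 \le i \le k-1$; and (ii) $\prod_{i=1}^{k-1}(\mathcal{L} - \mu_i I) = (-1)^{k-1}\frac{\prod_{i=1}^{k-1}\mu_i}{2m}\,\alpha\alpha^T$, where $\alpha^T = (\sqrt{d_1}, \sqrt{d_2}, \ldots, \sqrt{d_n})$. Moreover, in this case $\mu_1, \ldots, \mu_{k-1}, 0$ are exactly the $k$ distinct $\mathcal{L}$-eigenvalues of $G$.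
   Context: For a simple undirected graph with adjacency matrix $A$ and diagonal degree matrix $D$, the Laplacian is $L = D - A$ and the normalized Laplacian is $\mathcal{L} = D^{-1/2} L D^{-1/2}$; $\mathcal{L}$-eigenvalues are the eigenvalues of $\mathcal{L}$. $I$ is the identity matrix. *)

(* Defs.v *)
From mathcomp Require Import all_boot all_order all_algebra.
Set Implicit Arguments. Unset Strict Implicit. Unset Printing Implicit Defensive.
Import Order.TTheory GRing.Theory Num.Theory.
Local Open Scope ring_scope.

Definition simple_graph (n : nat) (adj : rel 'I_n) : Prop :=
  symmetric adj /\ irreflexive adj.

Definition connected_graph (n : nat) (adj : rel 'I_n) : Prop :=
  forall x y : 'I_n, connect adj x y.

Definition deg (n : nat) (adj : rel 'I_n) (i : 'I_n) : nat :=
  #|[set j | adj i j]|.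

Definition gsize (n : nat) (adj : rel 'I_n) : nat :=
  #|[set e : 'I_n * 'I_n | adj e.1 e.2 && (e.1 < e.2)%N]|.

Definition adjmx (R : pzRingType) (n : nat) (adj : rel 'I_n) : 'M[R]_n :=
  \matrix_(i, j) (adj i j)%:R.

Definition degmx (R : pzRingType) (n : nat) (adj : rel 'I_n) : 'M[R]_n :=
  \matrix_(i, j) ((i == j)%:R * (deg adj i)%:R).

Definition laplacian (R : pzRingType) (n : nat) (adj : rel 'I_n) : 'M[R]_n :=
  degmx R adj - adjmx R adj.

Definition degmx_isqrt (R : rcfType) (n : nat) (adj : rel 'I_n) : 'M[R]_n :=
  \matrix_(i, j) ((i == j)%:R * (Num.sqrt (deg adj i)%:R)^-1).

Definition nlaplacian (R : rcfType) (n : nat) (adj : rel 'I_n) : 'M[R]_n :=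
  degmx_isqrt R adj *m laplacian R adj *m degmx_isqrt R adj.

Definition sqrtdeg_col (R : rcfType) (n : nat) (adj : rel 'I_n) : 'cV[R]_n :=
  \col_i Num.sqrt (deg adj i)%:R.

Definition n_distinct_eigenvalues (F : fieldType) (n : nat) (A : 'M[F]_n)
  (k : nat) : Prop :=
  exists s : seq F, [/\ uniq s, size s = k & forall a, eigenvalue A a <-> a \in s].

(* Main.v *)
Require Import Defs.
From mathcomp Require Import all_boot all_order all_algebra.
From mathcomp Require Import complex ring.
Import Order.TTheory GRing.Theory Num.Theory.
Local Open Scope ring_scope.
Set Implicit Arguments. Unset Strict Implicit. Unset Printing Implicit Defensive.
Lemma spec_real (R : rcfType) n (A : 'M[R]_n) : A^T = A ->
  exists M : 'M[R[i]]_n, exists d : 'rV[R[i]]_n,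
   [/\ M \in unitmx, map_mx (real_complex R) A = invmx M *m diag_mx d *m M &
       forall j, exists r, d 0 j = (real_complex R r) /\ eigenvalue A r].
Proof.
move=> AT.
set Ac := map_mx (real_complex R) A.
have Aherm : Ac \is hermsymmx.
  apply: realsym_hermsym.
    apply/is_hermitianmxP; rewrite expr0 scale1r map_mx_id //.
    by rewrite /Ac map_trmx AT.
  by apply/mxOverP => i j; rewrite mxE /= complex_real.
have Anorm := hermitian_normalmx Aherm.
have Adec := orthomx_spectralP Anorm.
have Mu := spectral_unit Ac.
have dreal := hermitian_spectral_diag_real Aherm.
exists (spectralmx Ac), (spectral_diag Ac); split => // j.
have /mxOverP /(_ 0 j) := dreal.
case E: (spectral_diag Ac 0 j) => [a b]; rewrite complex_real => /eqP b0.
exists a; split; first by rewrite b0.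
have evc : eigenvalue Ac (real_complex R a).
  apply/eigenvalueP; exists (row j (spectralmx Ac)).
    rewrite -row_mul [X in _ *m X]Adec !mulmxA mulmxV // mul1mx mul_diag_mx.
    idtac.
    by apply/rowP => l; rewrite !mxE E b0.
  apply/negP => /eqP r0.
  have : row j (spectralmx Ac) *m invmx (spectralmx Ac) = row j 1%:M.
    by rewrite -row_mul mulmxV.
  rewrite r0 mul0mx => /rowP /(_ j); rewrite !mxE eqxx /= => /eqP.
  by rewrite eq_sym oner_eq0.
move: evc; rewrite !eigenvalue_root_char -map_char_poly.
by rewrite fmorph_root.
Qed.
Lemma prod_conj (F : fieldType) n (M : 'M[F]_n) (d : 'rV_n) r (c : 'I_r -> F) :
  M \in unitmx ->
  \prod_(i < r) (invmx M *m diag_mx d *m M - (c i)%:M) =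
  invmx M *m diag_mx (\row_j \prod_(i < r) (d 0 j - c i)) *m M.
Proof.
move=> Mu; elim: r c => [|r IH] c.
  rewrite big_ord0.
  have -> : (\row_j \prod_(i < 0) (d 0 j - c i)) = const_mx 1.
    by apply/rowP => j; rewrite !mxE big_ord0.
  by rewrite diag_const_mx mulmx1 mulVmx.
rewrite big_ord_recr /= IH.
have -> : invmx M *m diag_mx d *m M - (c ord_max)%:M =
   invmx M *m diag_mx (d - const_mx (c ord_max)) *m M.
  rewrite (raddfB diag_mx) /= diag_const_mx mulmxBr mulmxBl mul_mx_scalar -scalemxAl.
  by rewrite mulVmx // scalemx1.
rewrite -mulmxE !mulmxA mulmxK // -(mulmxA (invmx M)) mulmx_diag.
congr (_ *m diag_mx _ *m _); apply/rowP => j; rewrite !mxE big_ord_recr /=.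
by [].
Qed.

Lemma diag_mx0' (F : fieldType) n : diag_mx (0 : 'rV[F]_n) = 0.
Proof. by apply/matrixP => i j; rewrite !mxE mul0rn. Qed.
Lemma map_prod (R : rcfType) n (A : 'M[R]_n) r (c : 'I_r -> R) :
  map_mx (real_complex R) (\prod_(i<r) (A - (c i)%:M)) =
  \prod_(i<r) (map_mx (real_complex R) A - (real_complex R (c i))%:M).
Proof.
elim: r c => [|r IH] c; first by rewrite !big_ord0 map_mx1.
by rewrite !big_ord_recr /= -!mulmxE map_mxM IH map_mxB map_scalar_mx.
Qed.

Lemma sym_annihil (R : rcfType) n (A : 'M[R]_n) r (c : 'I_r -> R) : A^T = A ->
  (forall a, eigenvalue A a -> a = 0 \/ exists i, a = c i) ->
  A *m \prod_(i<r)(A - (c i)%:M) = 0 /\ \prod_(i<r)(A - (c i)%:M) *m A = 0.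
Proof.
move=> AT Hev.
have [M [d [Mu Adec Hd]]] := spec_real AT.
have key : diag_mx d *m diag_mx (\row_j \prod_(i < r) (d 0 j - real_complex R (c i))) = 0.
  rewrite mulmx_diag -(diag_mx0' _ n); congr diag_mx; apply/rowP => j.
  rewrite !mxE; have [x [-> /Hev [->|[i ->]]]] := Hd j; first by rewrite mul0r.
  by rewrite (bigD1 i) //= subrr mul0r mulr0.
have key2 : diag_mx (\row_j \prod_(i < r) (d 0 j - real_complex R (c i))) *m diag_mx d = 0.
  by rewrite -diag_mx_comm.
split; apply: (@map_mx_inj _ _ (real_complex R)); rewrite map_mxM map_prod Adec prod_conj // map_mx0.
  by rewrite !mulmxA mulmxK // -(mulmxA (invmx M)) key mulmx0 mul0mx.
by rewrite !mulmxA mulmxK // -(mulmxA (invmx M)) key2 mulmx0 mul0mx.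
Qed.
Section Graph.
Variables (R : rcfType) (n : nat) (adj : rel 'I_n).
Hypotheses (Hs : simple_graph adj) (Hc : connected_graph adj) (Hn : (1 < n)%N).

Lemma deg_sum i : deg adj i = (\sum_j adj i j)%N.
Proof.
rewrite /deg -sum1dep_card big_mkcond /=; apply: eq_bigr => j _.
by case: (adj i j).
Qed.

Lemma deg_sumR i : (deg adj i)%:R = \sum_j (adj j i)%:R :> R.
Proof.
rewrite deg_sum natr_sum; apply: eq_bigr => j _.
by case: Hs => sym _; rewrite sym.
Qed.

Lemma deg_pos i : (0 < deg adj i)%N.
Proof.
have [j ji] : exists j : 'I_n, j != i.
  case: (i =P Ordinal (ltnW Hn)) => [->|ne].
    by exists (Ordinal Hn); apply/eqP => /(congr1 val).
  by exists (Ordinal (ltnW Hn)); apply/eqP => E; apply: ne; rewrite E.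
have /connectP [[|x p] pth lst] := Hc i j.
  by move: ji; rewrite lst eqxx.
move: pth => /= /andP [aix _].
by rewrite /deg card_gt0; apply/set0Pn; exists x; rewrite inE.
Qed.

Definition sq i : R := Num.sqrt (deg adj i)%:R.

Lemma sq_gt0 i : 0 < sq i.
Proof. by rewrite sqrtr_gt0 ltr0n deg_pos. Qed.

Lemma sq_neq0 i : sq i != 0.
Proof. by rewrite gt_eqF // sq_gt0. Qed.

Lemma sq_sqr i : sq i ^+ 2 = (deg adj i)%:R.
Proof. by rewrite sqr_sqrtr // ler0n. Qed.

Lemma Lij i j : nlaplacian R adj i j =
  ((i == j)%:R * (deg adj i)%:R - (adj i j)%:R) / (sq i * sq j).
Proof.
rewrite /nlaplacian /degmx_isqrt.
have -> : (\matrix_(i, j) ((i == j)%:R * (Num.sqrt (deg adj i)%:R)^-1) : 'M[R]_n)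
   = diag_mx (\row_i (sq i)^-1).
  by apply/matrixP => a b; rewrite !mxE mulr_natl.
rewrite mul_diag_mx mul_mx_diag !mxE.
by rewrite invfM mulrA [_ * (sq i)^-1]mulrC.
Qed.

Lemma L_sym : (nlaplacian R adj)^T = nlaplacian R adj.
Proof.
case: Hs => sym irr.
apply/matrixP => i j; rewrite mxE !Lij sym [sq j * _]mulrC eq_sym.
by case: eqP => [->|]; rewrite ?mul0r.
Qed.

Lemma alpha_L : (sqrtdeg_col R adj)^T *m nlaplacian R adj = 0.
Proof.
apply/rowP => j; rewrite !mxE.

have E i : sq i * (((i == j)%:R * (deg adj i)%:R - (adj i j)%:R) / (sq i * sq j)) =
   ((i == j)%:R * (deg adj i)%:R - (adj i j)%:R) / sq j.
  by field; rewrite !sq_neq0.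
under eq_bigr => i _ do rewrite Lij !mxE -/(sq i) E.
rewrite -mulr_suml sumrB (bigD1 j) //= eqxx mul1r big1 ?addr0.
  by rewrite -deg_sumR subrr mul0r.
by move=> i /negPf ->; rewrite mul0r.
Qed.

Lemma L_alpha : nlaplacian R adj *m sqrtdeg_col R adj = 0.
Proof.
by rewrite -[LHS]trmxK trmx_mul L_sym alpha_L trmx0.
Qed.


Lemma ker_L (v : 'rV[R]_n) : v *m nlaplacian R adj = 0 ->
  exists c, v = c *: (sqrtdeg_col R adj)^T.
Proof.
case: Hs => sym irr.
move=> vL.
pose w i := v 0 i / sq i.
have Hj j : (deg adj j)%:R * w j = \sum_i (adj i j)%:R * w i.
  have /rowP /(_ j) := vL; rewrite !mxE.
  have E i : v 0 i * (((i == j)%:R * (deg adj i)%:R - (adj i j)%:R) / (sq i * sq j)) =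
     (w i * ((i == j)%:R * (deg adj i)%:R) - (adj i j)%:R * w i) / sq j.
    by rewrite /w; field; rewrite !sq_neq0.
  under eq_bigr => i _ do rewrite Lij E.
  rewrite -mulr_suml sumrB (bigD1 j) //= eqxx mul1r big1 ?addr0; last first.
    by move=> i /negPf ->; rewrite mul0r mulr0.
  move/eqP; rewrite mulf_eq0 invr_eq0 (negPf (sq_neq0 j)) orbF subr_eq0 => /eqP <-.
  by rewrite mulrC.
have i0 : 'I_n := Ordinal (ltnW Hn).
case: (@arg_maxP _ _ _ i0 predT w isT) => im _ Hm.
have step j i : w j = w im -> adj i j -> w i = w im.
  move=> wj aij.
  have : \sum_i (adj i j)%:R * (w im - w i) = 0.
    rewrite (eq_bigr (fun i => (adj i j)%:R * w im - (adj i j)%:R * w i)); last first.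
      by move=> l _; rewrite mulrBr.
    by rewrite sumrB -mulr_suml -deg_sumR -Hj wj subrr.
  move/psumr_eq0P => H.
  have nn : forall l : 'I_n, true -> 0 <= (adj l j)%:R * (w im - w l).
    by move=> l _; rewrite mulr_ge0 ?ler0n // subr_ge0; exact: Hm.
  have /eqP := H nn i isT.
  by rewrite aij mul1r subr_eq0 => /eqP.
have all_eq y : w y = w im.
  have /connectP [p pth ->] := Hc im y.
  have gen : forall x, w x = w im -> path adj x p -> w (last x p) = w im.
    elim: p {pth} => [|z p IH] x //= wx /andP [axz pz].
    by apply: IH pz; apply: step wx _; rewrite sym.
  exact: gen.
exists (w im); apply/rowP => i; rewrite !mxE -(all_eq i) /w divfK ?sq_neq0 //.
Qed.

Lemma sum_deg : (\sum_i deg adj i = 2 * gsize adj)%N.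
Proof.
case: Hs => sym irr.
rewrite /gsize -sum1dep_card.
under eq_bigr => i _ do rewrite deg_sum.
rewrite pair_bigA /=.
have E (e : 'I_n * 'I_n) : adj e.1 e.2 = ((adj e.1 e.2 && (e.1 < e.2)) + (adj e.1 e.2 && (e.2 < e.1)))%N :> nat.
  case: e => a b /=; case: (ltngtP a b) => [_|_|/val_inj ->] /=.
  - by case: (adj a b).
  - by case: (adj a b).
  - by rewrite irr.
rewrite (eq_bigr _ (fun e _ => E e)) big_split /= mul2n -addnn.
have S2 : (\sum_(i : 'I_n * 'I_n) (adj i.1 i.2 && (i.2 < i.1)) =
           \sum_(i : 'I_n * 'I_n) (adj i.1 i.2 && (i.1 < i.2)))%N.
  rewrite (reindex (fun e : 'I_n * 'I_n => (e.2, e.1))) /=; last first.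
    by exists (fun e : 'I_n * 'I_n => (e.2, e.1)) => [] [a b].
  by apply: eq_bigr => e _; rewrite sym.
rewrite S2; congr (_ + _)%N; rewrite [RHS]big_mkcond /=; apply: eq_bigr => e _; by case: (_ && _).
Qed.

End Graph.

Lemma eig_prod (F : fieldType) n (A : 'M[F]_n) (v : 'rV_n) a r (c : 'I_r -> F) :
  v *m A = a *: v -> v *m \prod_(i<r) (A - (c i)%:M) = (\prod_(i<r) (a - c i)) *: v.
Proof.
move=> vA; elim: r c => [|r IH] c; first by rewrite !big_ord0 mulmx1 scale1r.
rewrite !big_ord_recr /= -mulmxE mulmxA IH -scalemxAl mulmxBr vA mul_mx_scalar.
by rewrite -scalerBl scalerA.
Qed.

Lemma eig_unit (F : fieldType) n (A : 'M[F]_n) a :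
  eigenvalue A a = (A - a%:M \notin unitmx).
Proof. by rewrite /eigenvalue /eigenspace kermx_eq0 row_free_unit. Qed.

Theorem theorem4p5 (R : rcfType) (n : nat) (adj : rel 'I_n) (k : nat) :
  simple_graph adj -> connected_graph adj -> (2 <= k <= n)%N ->
  let L := nlaplacian R adj in
  let alpha := sqrtdeg_col R adj in
  let cond (mu : 'I_k.-1 -> R) :=
    [/\ injective mu, (forall i, mu i != 0),
        (forall i, L - (mu i)%:M \notin unitmx) &
        \prod_(i < k.-1) (L - (mu i)%:M) =
          ((-1) ^+ k.-1 * (\prod_(i < k.-1) mu i) / (2 * gsize adj)%:R)
            *: (alpha *m alpha^T)] in
  (n_distinct_eigenvalues L k <-> exists mu, cond mu) /\
  (forall mu, cond mu -> forall a, eigenvalue L a <-> (a = 0 \/ exists i, a = mu i)).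
Proof.
move=> Hs Hc /andP [k2 kn] L alpha cond.
have Hn : (1 < n)%N := leq_trans k2 kn.
have i0 : 'I_n := Ordinal (ltnW Hn).
have al0 : alpha^T != 0.
  apply/negP => /eqP /rowP /(_ i0); rewrite !mxE => /eqP.
  by rewrite (negPf (sq_neq0 R Hc Hn i0)).
have alL : alpha^T *m L = 0 := alpha_L R Hs Hc Hn.
have Lal : L *m alpha = 0 := L_alpha R Hs Hc Hn.
have Lsym : L^T = L := L_sym R Hs.
have ev0 : eigenvalue L 0.
  by apply/eigenvalueP; exists alpha^T => //; rewrite alL scale0r.
have moreover : forall mu, cond mu -> forall a, eigenvalue L a <-> (a = 0 \/ exists i, a = mu i).
  move=> mu [minj mnz msing mprod] a; split; last first.
    by case => [->|[i ->]] //; rewrite eig_unit msing.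
  move=> /eigenvalueP [v vL vnz].
  case: (eqVneq a 0) => [->|an0]; first by left.
  right; case: (boolP [exists i, a == mu i]) => [/existsP [i /eqP ->]|/existsPn H].
    by exists i.
  exfalso.
  have valpha : v *m alpha = 0.
    have : v *m L *m alpha = a *: (v *m alpha) by rewrite vL scalemxAl.
    rewrite -mulmxA Lal mulmx0 => /esym /eqP; rewrite scaler_eq0 (negPf an0) /=.
    by move/eqP.
  have := eig_prod mu vL; rewrite mprod -scalemxAr mulmxA valpha mul0mx scaler0.
  move/esym/eqP; rewrite scaler_eq0 (negPf vnz) orbF prodf_seq_eq0.
  move=> /hasP [i _ /= /eqP E].
  by move: (H i); rewrite -subr_eq0 E eqxx.
split => //; split.
- case=> s [us ss Hs'].
  have s0 : 0 \in s by apply/Hs'.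
  set t := rem 0 s.
  have st : size t = k.-1 by rewrite size_rem // ss.
  pose mu := fun i : 'I_k.-1 => nth 0 t i.
  have mut i : mu i \in t by rewrite mem_nth // st.
  have ut : uniq t := rem_uniq 0 us.
  have tmem x : (x \in t) = (x != 0) && (x \in s) by rewrite (mem_rem_uniq 0 us).
  have Hev a : eigenvalue L a -> a = 0 \/ exists i, a = mu i.
    move/Hs' => ain; case: (eqVneq a 0) => [->|an0]; [by left | right].
    have ait : a \in t by rewrite tmem an0.
    have il : (index a t < k.-1)%N by rewrite -st index_mem.
    by exists (Ordinal il); rewrite /mu /= nth_index.
  exists mu; split.
  + move=> i j /eqP; rewrite /mu nth_uniq ?st // => /eqP; apply: val_inj.
  + by move=> i; have := mut i; rewrite tmem => /andP [].
  + by move=> i; rewrite -eig_unit; apply/Hs'; have := mut i; rewrite tmem => /andP [].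
  have [LP PL] := sym_annihil Lsym Hev.
  set P := \prod_(i < k.-1) (L - (mu i)%:M) in LP PL *.
  have rowsP i : exists c, row i P = c *: alpha^T.
    by apply: (ker_L Hs Hc Hn); rewrite -row_mul PL row0.
  have colsP j : exists e, row j P^T = e *: alpha^T.
    have PTL : P^T *m L = 0 by rewrite -[X in _ *m X]Lsym -trmx_mul LP trmx0.
    by apply: (ker_L Hs Hc Hn); rewrite -row_mul PTL row0.
  have [e He] := colsP i0.
  pose t0 := e / sq R adj i0.
  have Pij i j : P i j = t0 * sq R adj i * sq R adj j.
    have [c Hc'] := rowsP i.
    have E1 : P i j = c * sq R adj j.
      by have /rowP /(_ j) := Hc'; rewrite !mxE.
    have E2 : P i i0 = c * sq R adj i0.
      by have /rowP /(_ i0) := Hc'; rewrite !mxE.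
    have E3 : P i i0 = e * sq R adj i.
      by have /rowP /(_ i) := He; rewrite !mxE.
    have Ec : c = e * sq R adj i / sq R adj i0.
      by rewrite -E3 E2 mulfK ?(sq_neq0 R Hc Hn).
    by rewrite /t0 E1 Ec; field; rewrite (sq_neq0 R Hc Hn).
  have aP : alpha^T *m P = (\prod_(i < k.-1) (0 - mu i)) *: alpha^T.
    by apply: eig_prod; rewrite alL scale0r.
  have sumsq : \sum_i sq R adj i * sq R adj i = (2 * gsize adj)%:R :> R.
    rewrite -(sum_deg Hs) natr_sum; apply: eq_bigr => i _.
    by rewrite -expr2 sq_sqr.
  have m0 : (2 * gsize adj)%:R != 0 :> R.
    rewrite pnatr_eq0 -(sum_deg Hs) -lt0n (bigD1 i0) //= ltn_addr //.
    exact: (deg_pos Hc Hn).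
  have tval : t0 * (2 * gsize adj)%:R = \prod_(i < k.-1) (0 - mu i).
    have /rowP /(_ i0) := aP; rewrite !mxE.
    under eq_bigr => i _ do rewrite Pij !mxE -/(sq R adj i).
    have -> : \sum_i sq R adj i * (t0 * sq R adj i * sq R adj i0) =
              t0 * sq R adj i0 * \sum_i sq R adj i * sq R adj i.
      by rewrite mulr_sumr; apply: eq_bigr => i _; rewrite /=; ring.
    rewrite sumsq -/(sq R adj i0) => /eqP.
    rewrite -mulrA [sq R adj i0 * _]mulrC mulrA => /eqP /(mulIf (sq_neq0 R Hc Hn i0)).
    by [].
  apply/matrixP => i j; rewrite Pij !mxE big_ord1 !mxE -/(sq R adj i) -/(sq R adj j).
  have -> : t0 = \prod_(i < k.-1) (0 - mu i) / (2 * gsize adj)%:R.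
    by rewrite -tval mulfK.
  under eq_bigr => l _ do rewrite sub0r.
  by rewrite prodrN card_ord; ring.
- case=> mu Hmu.
  exists (0 :: [seq mu i | i <- enum 'I_k.-1]); split.
  + rewrite /= map_inj_uniq ?enum_uniq ?andbT //; last by case: Hmu.
    apply/negP => /mapP [i _ E].
    by case: Hmu => _ /(_ i); rewrite -E eqxx.
  + by rewrite /= size_map size_enum_ord prednK // (leq_trans _ k2).
  move=> a; rewrite (moreover mu Hmu) in_cons; split.
    case=> [->|[i ->]]; first by rewrite eqxx.
    by apply/orP; right; apply/mapP; exists i; rewrite ?mem_enum.
  case/orP => [/eqP ->|/mapP [i _ ->]]; first by left.
  by right; exists i.
Qed.
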